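(* Let $b$ be a Boolean expression, $C$ a HeyVL statement, $I$ an expectation, $\vec v$ a list of variables, and let $S=\mathrm{Park}(b,C,I)$ be the HeyVL program $\mathtt{assert}\ I$ [labelled (1)]; $\mathtt{havoc}\ \vec v$; $\mathtt{validate}$; $\mathtt{assume}\ I$ [labelled (I)]; $\mathtt{if}\ b\ \{\ C;\ \mathtt{assert}\ I$ [labelled (2)]$;\ \mathtt{assume}\ ?(\mathsf{false})$ [labelled (II)] $\}\ \mathtt{else}\ \{\}$. Let $X,Y$ be expectations, and let $S'$ be obtained from $S$ by removing some subset of the assertions (1) and (2), such that $\sigma\not\models\{X\}S'\{Y\}$ for some state $\sigma$, and such that $S'$ is minimal with this property (removing any further one of the assertions (1),(2) that $S'$ still contains yields a program $S''$ with $\models\{X\}S''\{Y\}$). Then: (1) If $S'$ includes assertion (1), then $X(\sigma')\not\le I(\sigma')$ for some state $\sigma'$. (2) If $S'$ includes assertion (2), then there is a state $\sigma'$ in which $b$ is true and $\sigma'\not\models\{I\}C\{I\}$. (3) If $S'$ includes neither (1) nor (2), and $C$ contains neither $\mathtt{assert}$ nor $\mathtt{coassume}$ statements, then there is a state $\sigma'$ in which $b$ is false and $I(\sigma')\not\le Y(\sigma')$.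
   Context: Expectations are functions from program states to $[0,\infty]$, ordered pointwise. $?(b)$ denotes the expectation equal to $\infty$ where $b$ holds and $0$ elsewhere. HeyVL statements and verification pre-expectation transformer $\mathrm{vp}$: $x :\approx \sum_i p_i\cdot t_i$: $\sum_i p_i X[x/t_i]$; $\mathtt{reward}\ a$: $X+a$; $S_1;S_2$: $\mathrm{vp}[S_1](\mathrm{vp}[S_2](X))$; $\mathtt{if}(\sqcap)/\mathtt{if}(\sqcup)\{S_1\}\mathtt{else}\{S_2\}$: pointwise min/max of the branch values; $\mathtt{assert}\ Y$: $\min(Y,X)$; $\mathtt{coassert}\ Y$: $\max(Y,X)$; $\mathtt{assume}\ Y$: $\infty$ where $Y\le X$, else $X$; $\mathtt{coassume}\ Y$: $0$ where $Y\ge X$, else $X$; $\mathtt{havoc}\ \vec v$/$\mathtt{cohavoc}\ \vec v$: pointwise inf/sup of $X$ over all values of $\vec v$; $\mathtt{validate}$: $\infty$ where $X=\infty$, else $0$; $\mathtt{covalidate}$: $0$ where $X=0$, else $\infty$. The conditional $\mathtt{if}\ b\{S_1\}\mathtt{else}\{S_2\}$ abbreviates $\mathtt{if}(\sqcap)\{\mathtt{assume}\ ?(b);S_1\}\mathtt{else}\{\mathtt{assume}\ ?(\neg b);S_2\}$. Removing a statement means replacing it by $\mathtt{skip}$ with $\mathrm{vp}[\mathtt{skip}](X)=X$. Write $\sigma\models\{A\}S\{B\}$ iff $A(\sigma)\le\mathrm{vp}[S](B)(\sigma)$, and $\models\{A\}S\{B\}$ iff this holds for all states. *)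

(* Defs.v *)
From HB Require Import structures.
From mathcomp Require Import all_boot all_order all_algebra.
From mathcomp Require Import boolp classical_sets reals constructive_ereal ereal.
Set Implicit Arguments. Unset Strict Implicit. Unset Printing Implicit Defensive.
Import Order.TTheory GRing.Theory Num.Theory.
Local Open Scope classical_set_scope.
Local Open Scope ring_scope.
Local Open Scope ereal_scope.

Section HeyVL.
Variables (R : realType) (Var : eqType) (Val : Type).

Definition state := Var -> Val.
(* expectations: functions from states to [0, oo]; nonnegativity is
   imposed via [nonneg_exp] *)
Definition expectation := state -> \bar R.
Definition nonneg_exp (X : expectation) := forall s, 0 <= X s.

Definition upd (s : state) (x : Var) (v : Val) : state :=
  fun y => if y == x then v else s y.

Definition iverson_inf (b : state -> bool) : expectation :=
  fun s => if b s then +oo else 0.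

Inductive choice := Demonic | Angelic.

Inductive stmt :=
| Skip
| Assign of Var & seq ((state -> R) * (state -> Val))  (* x :~ sum_i p_i . t_i *)
| Reward of expectation
| Seq of stmt & stmt
| Ite of choice & stmt & stmt
| Assert of expectation
| Coassert of expectation
| Assume of expectation
| Coassume of expectation
| Havoc of seq Var
| Cohavoc of seq Var
| Validate
| Covalidate.

Definition havoc_set (vs : seq Var) (s : state) : set state :=
  [set s' | forall y, y \notin vs -> s' y = s y].

Fixpoint vp (S : stmt) (X : expectation) : expectation :=
  match S with
  | Skip => X
  | Assign x d => fun s =>
      \sum_(pt <- d) ((pt.1 s)%:E * X (upd s x (pt.2 s)))
  | Reward a => fun s => X s + a s
  | Seq S1 S2 => vp S1 (vp S2 X)
  | Ite Demonic S1 S2 => fun s => Order.min (vp S1 X s) (vp S2 X s)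
  | Ite Angelic S1 S2 => fun s => Order.max (vp S1 X s) (vp S2 X s)
  | Assert Y => fun s => Order.min (Y s) (X s)
  | Coassert Y => fun s => Order.max (Y s) (X s)
  | Assume Y => fun s => if Y s <= X s then +oo else X s
  | Coassume Y => fun s => if X s <= Y s then 0 else X s
  | Havoc vs => fun s => ereal_inf [set X s' | s' in havoc_set vs s]
  | Cohavoc vs => fun s => ereal_sup [set X s' | s' in havoc_set vs s]
  | Validate => fun s => if X s == +oo then +oo else 0
  | Covalidate => fun s => if X s == 0 then 0 else +oo
  end.

Fixpoint wf_stmt (S : stmt) : Prop :=
  match S with
  | Skip | Havoc _ | Cohavoc _ | Validate | Covalidate => True
  | Assign _ d => forall s, all (fun pt => (0 <= pt.1 s)%R) d
                            /\ (\sum_(pt <- d) pt.1 s)%R = 1%R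
  | Reward a | Assert a | Coassert a | Assume a | Coassume a => nonneg_exp a
  | Seq S1 S2 | Ite _ S1 S2 => wf_stmt S1 /\ wf_stmt S2
  end.

Fixpoint no_assert_coassume (S : stmt) : bool :=
  match S with
  | Assert _ | Coassume _ => false
  | Seq S1 S2 | Ite _ S1 S2 => no_assert_coassume S1 && no_assert_coassume S2
  | _ => true
  end.

Definition sat_at (s : state) (A : expectation) (S : stmt) (B : expectation) :=
  A s <= vp S B s.
Definition valid (A : expectation) (S : stmt) (B : expectation) :=
  forall s, sat_at s A S B.

Definition ite_b (b : state -> bool) (S1 S2 : stmt) : stmt :=
  Ite Demonic (Seq (Assume (iverson_inf b)) S1)
              (Seq (Assume (iverson_inf (fun s => ~~ b s))) S2).

(* Park(b,C,I) with assertion (1) kept iff k1 and assertion (2) kept iff k2;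
   a removed assertion is replaced by skip. *)
Definition park (k1 k2 : bool) (b : state -> bool) (C : stmt)
    (I : expectation) (vs : seq Var) : stmt :=
  Seq (if k1 then Assert I else Skip)
  (Seq (Havoc vs)
  (Seq Validate
  (Seq (Assume I)
       (ite_b b (Seq C (Seq (if k2 then Assert I else Skip)
                            (Assume (iverson_inf (fun _ => false)))))
                Skip)))).

End HeyVL.

(* Main.v *)
Require Import Defs.
From mathcomp Require Import all_boot all_order all_algebra.
From mathcomp Require Import boolp classical_sets reals constructive_ereal ereal.
Import Order.TTheory GRing.Theory Num.Theory.
Local Open Scope ereal_scope.

Lemma vp_ge0 (R : realType) (Var : eqType) (Val : Type) (C : stmt R Var Val) :
  wf_stmt C -> forall X, nonneg_exp X -> nonneg_exp (vp C X).
Proof.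
elim: C => /=.
- by [].
- move=> x d wf X hX s; move: (wf s) => [+ _].
  elim: d {wf} => [|pt d IH] /=; first by rewrite big_nil.
  move=> /andP[h1 h2]; rewrite big_cons; apply: adde_ge0; last exact: IH.
  by apply: mule_ge0 => //; rewrite lee_fin.
- move=> a ha X hX s; exact: adde_ge0.
- move=> S1 IH1 S2 IH2 [w1 w2] X hX; exact: IH1 w1 _ (IH2 w2 _ hX).
- move=> [] S1 IH1 S2 IH2 [w1 w2] X hX s /=.
  + by rewrite le_min (IH1 w1 X hX s) (IH2 w2 X hX s).
  + by rewrite le_max (IH1 w1 X hX s).
- move=> Y hY X hX s; by rewrite le_min hY hX.
- move=> Y hY X hX s; by rewrite le_max hY.
- move=> Y hY X hX s; case: ifP => //.
- move=> Y hY X hX s; case: ifP => //.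
- move=> vs _ X hX s; apply/ereal_infP => y [s' _ <-]; exact: hX.
- move=> vs _ X hX s; apply: le_trans (hX s) _; apply: ereal_sup_ubound; by exists s.
- move=> _ X hX s; case: ifP => //.
- move=> _ X hX s; case: ifP => //.
Qed.

Lemma sum_ge0_seq (R : realType) (T : Type) (d : seq T) (f : T -> R) :
  all (fun pt => (0 <= f pt)%R) d -> (0 <= \sum_(pt <- d) f pt)%R.
Proof.
elim: d => [|pt d IH] /=; first by rewrite big_nil.
by move=> /andP[h1 h2]; rewrite big_cons addr_ge0 // IH.
Qed.

Lemma vp_oo (R : realType) (Var : eqType) (Val : Type) (C : stmt R Var Val) :
  wf_stmt C -> no_assert_coassume C -> vp C (fun _ => +oo) = (fun _ => +oo).
Proof.
elim: C => /=.
- by [].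
- move=> x d wf _; apply: funext => s.
  move: (wf s) => [hp hs].
  suff -> : (\sum_(pt <- d) ((pt.1 s)%:E * +oo))%E = ((\sum_(pt <- d) pt.1 s)%R%:E * +oo)%E
    by rewrite hs mul1e.
  elim: d {wf hs} hp => [|pt d IH] /=; first by rewrite !big_nil mul0e.
  move=> /andP[h1 h2]; rewrite !big_cons IH // EFinD ge0_muleDl //.
  by rewrite lee_fin; apply: sum_ge0_seq.
- move=> a ha _; apply: funext => s; rewrite addye //.
  by apply: contra_eq_neq (ha s) => ->.
- move=> S1 IH1 S2 IH2 [w1 w2] /andP[n1 n2]; by rewrite IH2 // IH1.
- move=> [] S1 IH1 S2 IH2 [w1 w2] /andP[n1 n2]; apply: funext => s /=;
  by rewrite IH1 // IH2 // ?minxx ?maxxx.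
- by [].
- move=> Y _ _; apply: funext => s; apply/eqP; by rewrite eq_le leey le_max lexx orbT.
- move=> Y _ _; apply: funext => s; by case: ifP.
- by [].
- move=> vs _ _; apply: funext => s; apply/eqP; rewrite eq_le leey /=.
  apply/ereal_infP => y [s' _ <-] //.
- move=> vs _ _; apply: funext => s; apply/eqP; rewrite eq_le leey /=.
  apply: ereal_sup_ubound; by exists s.
- by move=> _ _; apply: funext => s; rewrite ?eqxx.
- by move=> _ _; apply: funext => s.
Qed.

Lemma ite_eq (R : realType) (Var : eqType) (Val : Type) (b : state Var Val -> bool)
  (S1 : stmt R Var Val) (Y : expectation R Var Val) :
  nonneg_exp Y -> nonneg_exp (vp S1 Y) ->
  vp (ite_b b S1 (@Skip R Var Val)) Y = fun s => if b s then vp S1 Y s else Y s.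
Proof.
move=> hY hS; apply: funext => s; rewrite /ite_b /= /iverson_inf.
case: (b s) => /=.
- rewrite (hY s) leye_eq miney; by case: eqP.
- rewrite (hS s) leye_eq minye; by case: eqP.
Qed.

Lemma assume_false (R : realType) (Var : eqType) (Val : Type) (Y : expectation R Var Val) :
  nonneg_exp Y -> vp (Assume (iverson_inf R (fun _ => false))) Y = fun _ => +oo.
Proof. by move=> hY; apply: funext => s /=; rewrite /iverson_inf hY. Qed.

Lemma ltV (R : realType) (u x : \bar R) :
  (if u == +oo then +oo else 0) < x -> u != +oo.
Proof. by case: eqP => // _; rewrite ltNge leey. Qed.

Theorem theorem6 (R : realType) (Var : eqType) (Val : Type)
  (b : state Var Val -> bool) (C : stmt R Var Val)
  (I X Y : expectation R Var Val) (vs : seq Var) (k1 k2 : bool) :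
  nonneg_exp I -> nonneg_exp X -> nonneg_exp Y -> wf_stmt C ->
  (exists s, ~ sat_at s X (park k1 k2 b C I vs) Y) ->
  (k1 -> valid X (park false k2 b C I vs) Y) ->
  (k2 -> valid X (park k1 false b C I vs) Y) ->
  [/\ (k1 -> exists s', ~ (X s' <= I s')),
      (k2 -> exists s', b s' /\ ~ sat_at s' I C I)
    & (~~ k1 -> ~~ k2 -> no_assert_coassume C ->
       exists s', ~~ b s' /\ ~ (I s' <= Y s'))].
Proof.
move=> hI hX hY wC [s hs] h1 h2.
pose W (k : bool) : expectation R Var Val := if k then I else (fun _ => +oo).
have hW : forall k, nonneg_exp (W k) by case=> //= ?; rewrite leey.
pose T k s' := if b s' then vp C (W k) s' else Y s'.
pose U k s' := if I s' <= T k s' then +oo else T k s'.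
pose V k s' := if U k s' == +oo then +oo else (0 : \bar R).
pose H k s := ereal_inf [set V k s' | s' in havoc_set vs s].
have PE : forall k k' s, vp (park k k' b C I vs) Y s =
    if k then Order.min (I s) (H k' s) else H k' s.
  move=> k k' s0.
  have E : vp (Seq C (Seq (if k' then Assert I else @Skip R Var Val)
        (Assume (iverson_inf R (fun=> false))))) Y = vp C (W k').
    change (vp C (vp (if k' then Assert I else Skip R Var Val)
       (vp (Assume (iverson_inf R (fun=> false))) Y)) = vp C (W k')).
    rewrite assume_false //; congr (vp C _).
    by case: k' => //=; apply: funext => s1; rewrite miney.
  rewrite /park; cbn [vp].
  rewrite ite_eq //; last by rewrite E; apply: vp_ge0.
  rewrite E.
  by case: k.
have key : forall k s0 x, H k s0 < x ->
    exists s', [/\ havoc_set vs s0 s', V k s' < x & ~ (I s' <= T k s')].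
  move=> k s0 x /ereal_inf_lt [y [s' hs' <-] hlt]; exists s'; split => //.
  move: (@ltV R _ _ hlt); rewrite /U; case: ifP => // _; by rewrite eqxx.
rewrite /sat_at PE in hs.
split.
- move=> k1T; exists s => hXI; move: (h1 k1T s); rewrite /sat_at PE => hf.
  by apply: hs; rewrite k1T le_min hXI.
- move=> k2T; move: (h2 k2T s); rewrite /sat_at PE => hf; rewrite k2T in hs.
  have hlt : H true s < X s.
    rewrite ltNge; apply/negP => hle; apply: hs.
    case: (k1) hf => //; rewrite !le_min => /andP[-> _]; by rewrite hle.
  have hle : X s <= H false s by case: (k1) hf => //; rewrite le_min => /andP[].
  have [s' [hh hV hn]] := key _ _ _ hlt.
  have hV' : V true s' < V false s'.
    apply: lt_le_trans hV (le_trans hle _); apply: ereal_inf_lbound; by exists s'.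
  have bs : b s'.
    apply/negPn/negP => nb; move: hV'; rewrite /V /U /T (negbTE nb) ltxx; by [].
  by exists s'; split => //; move: hn; rewrite /T bs.
- move=> nk1 nk2 nac; rewrite (negbTE nk1) (negbTE nk2) in hs.
  have hlt : H false s < X s by rewrite ltNge; apply/negP.
  have [s' [hh hV hn]] := key _ _ _ hlt.
  exists s'; move: hn; rewrite /T; case: (b s') => /= hn; last by split.
  by exfalso; apply: hn; rewrite /W (vp_oo R Var Val C wC nac) /= leey.
Qed.
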